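(* Let $S\subseteq BS^{+}(1,3)$ be a finite set of size $k$ with coset decomposition $S=S_0\cup S_1\cup\cdots\cup S_t$, where $t\geq 2$. If $k_0=|S_0|\geq 2$ and $k_i=|S_i|=1$ for all $1\le i\le t$, then $|S^2|\geq \tfrac{7}{2}k-6$.
   Context: $BS(1,3)=\langle a,b\mid ab=ba^3\rangle$; $BS^{+}(1,3)=\{b^m a^x: m\in\mathbb{Z}_{\ge 0},\ x\in\mathbb{Z}\}$, with $(b^m a^x)(b^n a^y)=b^{m+n}a^{y+3^n x}$. $S^2=\{st: s,t\in S\}$. Coset decomposition: for a finite nonempty $S\subseteq BS^{+}(1,3)$, let $m_0<m_1<\cdots<m_t$ be the distinct integers $m\ge 0$ with $S\cap b^m a^{\mathbb Z}\neq\emptyset$; put $S_i=S\cap b^{m_i}a^{\mathbb Z}=b^{m_i}a^{A_i}$ with $A_i\subseteq\mathbb Z$ finite, and $k_i=|S_i|$. *)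

(* Defs.v *)
From HB Require Import structures.
From mathcomp Require Import all_boot all_order all_algebra.
From mathcomp Require Import finmap.
Set Implicit Arguments. Unset Strict Implicit. Unset Printing Implicit Defensive.
Import GRing.Theory Num.Theory.
Local Open Scope ring_scope.
Local Open Scope fset_scope.

(* Elements b^m a^x of BS^+(1,3) are represented by pairs (m, x) : nat * int. *)
Definition bsp := (nat * int)%type.

(* (b^m a^x)(b^n a^y) = b^(m+n) a^(y + 3^n x) *)
Definition bsmul (s t : bsp) : bsp :=
  ((fst s + fst t)%N, ((snd t : int) + (3 ^ fst t)%N%:Z * (snd s : int))%R).

Definition sqset (S : {fset bsp}) : {fset bsp} :=
  [fset bsmul s t | s in S, t in S].

Definition levels (S : {fset bsp}) : {fset nat} := [fset fst s | s in S].

Definition coset (S : {fset bsp}) (m : nat) : {fset bsp} :=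
  [fset s in S | fst s == m].

(* Main.v *)
Require Import Defs.
From HB Require Import structures.
From mathcomp Require Import all_boot all_order all_algebra.
From mathcomp Require Import finmap.
From mathcomp Require Import zify ring lra.
Import GRing.Theory Num.Theory Order.TTheory.
Local Open Scope ring_scope.
Lemma key0 (c s h l t : int) : 0 <= c -> l <= s -> s <= h -> l <= t -> t + c*h = l + c*s -> t = l.
Proof. move=> c0 ls sh lt e. have : c*s <= c*h by rewrite ler_wpM2l. lia. Qed.
Lemma key1 (c s h l u1 u2 d: int) : 3 <= c -> l < h -> l <= u1 <= h -> l <= u2 <= h ->
  s + c * h = u1 + d -> s + c * l = u2 + d -> False.
Proof. move=> c3 lh /andP[a b] /andP[a' b'] e1 e2.
have : 3 * (h - l) <= c * (h - l) by rewrite ler_wpM2r // subr_ge0 ltW. lia. Qed.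

Local Open Scope fset_scope.
Set Implicit Arguments. Unset Strict Implicit.

Definition U (T : {fset bsp}) (s : seq nat) : {fset bsp} := [fset p in T | p.1 \in s].

Lemma card_U_sum (T : {fset bsp}) (s : seq nat) : uniq s ->
  #|` U T s| = (\sum_(l <- s) #|` coset T l|)%N.
Proof.
elim: s => [|l s IH] /=.
  move=> _; rewrite big_nil; apply/eqP; rewrite cardfs_eq0; apply/eqP/fsetP=> p.
  by rewrite !inE andbF.
case/andP=> ls us; rewrite big_cons -IH //.
have -> : U T (l :: s) = coset T l `|` U T s.
  by apply/fsetP=> p; rewrite !inE; case: (p \in T); rewrite ?andbF.
have := cardfsUI (coset T l) (U T s).
have -> : coset T l `&` U T s = fset0.
  apply/fsetP=> p; rewrite !inE; apply/negbTE; apply/negP => /andP[/andP[_ /eqP e] /andP[_ ps]].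
  by move: ls; rewrite -e ps.
by rewrite cardfs0 addn0.
Qed.

Lemma U_union (T : {fset bsp}) (A B : seq nat) : (forall l, l \in A -> l \notin B) ->
  #|` U T (A ++ B)| = (#|` U T A| + #|` U T B|)%N.
Proof.
move=> dAB.
have -> : U T (A ++ B) = U T A `|` U T B.
  by apply/fsetP=> p; rewrite !inE mem_cat; case: (p \in T).
have := cardfsUI (U T A) (U T B).
have -> : U T A `&` U T B = fset0.
  apply/fsetP=> p; rewrite !inE; apply/negbTE; apply/negP => /andP[/andP[_ pA] /andP[_ pB]].
  by move: (dAB _ pA); rewrite pB.
by rewrite cardfs0 addn0.
Qed.

Lemma U_le (T : {fset bsp}) s : (#|` U T s| <= #|` T|)%N.
Proof. apply: fsubset_leq_card; apply/fsubsetP=> p; rewrite !inE; by case/andP. Qed.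

Lemma seq_argmax (T : eqType) (f : T -> int) (s : seq T) : s != [::] ->
  exists2 x, x \in s & forall y, y \in s -> f y <= f x.
Proof.
elim: s => [//|a s IH] _.
case: s IH => [|b s] IH.
  by exists a; rewrite ?inE // => y; rewrite inE => /eqP->.
have [x xs hx] := IH isT.
case: (lerP (f a) (f x)) => h.
  exists x; first by rewrite inE xs orbT.
  by move=> y; rewrite inE => /orP[/eqP->//|]; apply: hx.
exists a; first by rewrite inE eqxx.
move=> y; rewrite inE => /orP[/eqP->//|/hx]; move=> hy; apply: le_trans hy _; exact: ltW.
Qed.

Lemma seq_argmin (T : eqType) (f : T -> int) (s : seq T) : s != [::] ->
  exists2 x, x \in s & forall y, y \in s -> f x <= f y.
Proof.
move=> /(@seq_argmax T (fun x => - f x)) [x xs hx]; exists x => // y /hx.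
by rewrite lerN2.
Qed.

Lemma bsmul_injl t : injective (fun s => bsmul s t).
Proof.
move=> [a x] [b y] /= [] e1 e2.
have ab : a = b by lia.
subst b; congr pair.
have h : (3 ^ t.1)%N%:Z != 0 by rewrite eqz_nat expn_eq0.
by apply: (mulfI h); apply: (addrI t.2).
Qed.

Lemma bsmul_injr s : injective (bsmul s).
Proof.
move=> [a x] [b y] /= [] e1 e2.
have ab : a = b by lia.
subst b; congr pair.
by move: e2 => /addIr.
Qed.

Lemma sum_const_seq (r : seq nat) c : (\sum_(i <- r) c)%N = (c * size r)%N.
Proof. by rewrite -sum1_size big_distrr /= ; apply: eq_bigr => _ _; rewrite muln1. Qed.

Lemma two_elems (A : {fset bsp}) : (2 <= #|` A|)%N ->
  exists x y, [/\ x \in A, y \in A & x != y].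
Proof.
move=> h; have [A0|[x xA]] := fset_0Vmem A.
  by move: h; rewrite A0 cardfs0.
have := cardfsD1 x A; rewrite xA => e.
have : (0 < #|` A `\ x|)%N by move: h; rewrite e /=; lia.
rewrite cardfs_gt0 => /fset0Pn [y]; rewrite in_fsetD1 => /andP[yx yA].
by exists x, y; split => //; rewrite eq_sym.
Qed.

Lemma coset_mem S m p : (p \in coset S m) = (p \in S) && (p.1 == m).
Proof. by rewrite !inE. Qed.

Lemma sq_mem S s t : s \in S -> t \in S -> bsmul s t \in sqset S.
Proof. by move=> sS tS; apply: in_imfset2. Qed.

Lemma hilo S m0 : (2 <= #|` coset S m0|)%N ->
  exists hi lo, [/\ hi \in coset S m0, lo \in coset S m0, lo.2 < hi.2 &
    forall x, x \in coset S m0 -> lo.2 <= x.2 <= hi.2].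
Proof.
move=> h.
have ne : enum_fset (coset S m0) != [::].
  by apply/eqP => e; move: h; rewrite e.
have [hi hin hhi] := @seq_argmax bsp (fun p : bsp => p.2) _ ne.
have [lo lon hlo] := @seq_argmin bsp (fun p : bsp => p.2) _ ne.
exists hi, lo; split => //; last by move=> x xS; rewrite hhi ?hlo.
have [x [y [xS yS xy]]] := two_elems h.
rewrite lt_neqAle (hlo hi hin) andbT; apply/eqP => e.
have ex := hlo x xS; have ey := hlo y yS; have fx := hhi x xS; have fy := hhi y yS.
have x2 : x.2 = y.2.
  apply/eqP; rewrite eq_le; apply/andP; split; [apply: le_trans fx _|apply: le_trans fy _]; by rewrite -e.
move: xS yS; rewrite !coset_mem => /andP[_ /eqP x1] /andP[_ /eqP y1].
by move: xy; case: x x1 x2 {ex fx} => a b; case: y y1 {ey fy} => c d /= -> -> ->; rewrite eqxx.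
Qed.

Lemma lvl0 S m0 : (2 <= #|` coset S m0|)%N ->
  (2 * #|` coset S m0| - 1 <= #|` coset (sqset S) (m0 + m0)|)%N.
Proof.
move=> h; have [hi [lo [hiS loS hl hb]]] := hilo h.
set S0 := coset S m0.
set P := [fset bsmul hi t | t in S0].
set Q := [fset bsmul s lo | s in S0].
have cP : #|` P| = #|` S0| by rewrite card_imfset //=; apply: bsmul_injr.
have cQ : #|` Q| = #|` S0| by rewrite card_imfset //=; apply: bsmul_injl.
have sub : P `|` Q `<=` coset (sqset S) (m0 + m0).
  apply/fsubsetP => p; rewrite in_fsetU => /orP[] /imfsetP [u uS ->] /=;
  move: uS hiS loS; rewrite !coset_mem => /andP[uS /eqP u1] /andP[hS /eqP h1] /andP[lS /eqP l1];
  by rewrite sq_mem //= ?u1 ?h1 ?l1.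
have cI : (#|` P `&` Q| <= 1)%N.
  rewrite -(cardfs1 (bsmul hi lo)); apply: fsubset_leq_card; apply/fsubsetP => p.
  rewrite in_fsetI => /andP[/imfsetP [t tS ->] /imfsetP [s sS]].
  rewrite in_fset1.
  have /andP[ls sh] := hb _ sS; have /andP[lt th] := hb _ tS.
  move: tS sS loS; rewrite !coset_mem => /andP[_ /eqP t1] /andP[_ /eqP s1] /andP[_ /eqP l1].
  rewrite /bsmul /= => -[_ e].
  rewrite t1 l1 in e.
  have t2 := @key0 (3 ^ m0)%N%:Z _ _ _ _ isT ls sh lt e.
  apply/eqP; congr bsmul.
  by move: t2 t1 l1; clear; case: t => a b; case: lo => c d /= -> -> ->.
have := cardfsUI P Q; have := fsubset_leq_card sub; rewrite cP cQ. move: cI. set a := #|` P `&` Q|. set b := #|` P `|` Q|. lia.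
Qed.

Lemma three_le m : (0 < m)%N -> 3 <= (3 ^ m)%N%:Z.
Proof. rewrite lez_nat; case: m => [//|m] _; rewrite expnS; have := expn_gt0 3 m; lia. Qed.

Lemma lvl1 S m0 m s : (2 <= #|` coset S m0|)%N -> (m0 < m)%N -> s \in S -> s.1 = m ->
  (#|` coset S m0| + 1 <= #|` coset (sqset S) (m0 + m)|)%N.
Proof.
move=> h mm sS s1; have [hi [lo [hiS loS hl hb]]] := hilo h.
set S0 := coset S m0.
set Q := [fset bsmul s u | u in S0].
have cQ : #|` Q| = #|` S0| by rewrite card_imfset //=; apply: bsmul_injr.
have subQ : Q `<=` coset (sqset S) (m0 + m).
  apply/fsubsetP => p /imfsetP [u uS ->] /=.
  move: uS; rewrite !coset_mem => /andP[uS /eqP u1].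
  by rewrite sq_mem //= u1 s1 addnC.
have inl : forall x, x \in S0 -> bsmul x s \in coset (sqset S) (m0 + m).
  move=> x; rewrite !coset_mem => /andP[xS /eqP x1].
  by rewrite sq_mem //= x1 s1.
have [p [pQ pC]] : exists p, p \notin Q /\ p \in coset (sqset S) (m0 + m).
  case pq1: (bsmul hi s \in Q); last by exists (bsmul hi s); rewrite pq1 inl.
  case pq2: (bsmul lo s \in Q); last by exists (bsmul lo s); rewrite pq2 inl.
  exfalso.
  move: pq1 pq2 => /imfsetP [u1 u1S e1] /imfsetP [u2 u2S e2].
  have b1 := hb _ u1S; have b2 := hb _ u2S.
  move: u1S u2S hiS loS; rewrite !coset_mem => /andP[_ /eqP v1] /andP[_ /eqP v2] /andP[_ /eqP h1] /andP[_ /eqP l1].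
  move: e1 e2; rewrite /bsmul /= v1 v2 s1 => -[_ e1] [_ e2].
  have mp : (0 < m)%N by apply: leq_ltn_trans mm.
  exact: (key1 _ _ _ _ _ _ _ (three_le mp) hl b1 b2 e1 e2).
have : p |` Q `<=` coset (sqset S) (m0 + m) by rewrite fsubUset fsub1set pC subQ.
move/fsubset_leq_card; rewrite cardfsU1 pQ cQ /=; lia.
Qed.

Lemma sum_ge (r : seq nat) (F : nat -> nat) c : (forall m, m \in r -> c <= F m)%N ->
  (c * size r <= \sum_(m <- r) F m)%N.
Proof.
move=> h; rewrite -sum_const_seq big_seq [X in (_ <= X)%N]big_seq.
by apply: leq_sum => i /h.
Qed.

Lemma final_arith (k q k0 t : nat) : (2 <= k0)%N -> (2 <= t)%N -> k = (k0 + t)%N ->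
  (2 * k0 - 1 + (k0 + 1) * t + t <= q)%N ->
  (7%:R / 2%:R) * k%:R - 6%:R <= q%:R :> rat.
Proof.
move=> h0 ht hk hq.
have H : (7 * k <= 2 * q + 12)%N by rewrite hk; nia.
have : (7 * k)%:R <= (2 * q + 12)%:R :> rat by rewrite ler_nat.
rewrite natrM natrD natrM => H2.
lra.
Qed.

Theorem lemma2p2 (S : {fset bsp}) (m0 : nat) :
  m0 \in levels S ->
  (forall m, m \in levels S -> (m0 <= m)%N) ->
  (3 <= #|` levels S|)%N ->
  (2 <= #|` coset S m0|)%N ->
  (forall m, m \in levels S -> m <> m0 -> #|` coset S m| = 1%N) ->
  (7%:R / 2%:R) * (#|` S|)%:R - 6%:R <= (#|` sqset S|)%:R :> rat.
Proof.
move=> m0L minL L3 k02 other.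
set L := levels S; set L1 := L `\ m0.
have cL : #|` L| = (1 + #|` L1|)%N by rewrite (cardfsD1 m0 L) m0L.
have t2 : (2 <= #|` L1|)%N by move: L3; rewrite cL; lia.
have memL : forall p, p \in S -> p.1 \in L by move=> p pS; apply: in_imfset.
have L1gt : forall m, m \in L1 -> (m0 < m)%N.
  move=> m; rewrite in_fsetD1 => /andP[mm mL]; rewrite ltn_neqAle eq_sym mm minL //.
have single : forall m, m \in L -> exists2 s, s \in S & s.1 = m.
  by move=> m /imfsetP [s sS ->]; exists s.
have c1 : forall m, m \in L1 -> #|` coset S m| = 1%N.
  move=> m; rewrite in_fsetD1 => /andP[mm mL]; apply: other => //; exact/eqP.
have m0L1 : m0 \notin L1 by rewrite fsetD11.
have cS : #|` S| = (#|` coset S m0| + #|` L1|)%N.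
  have -> : #|` S| = #|` U S (m0 :: L1)|.
    congr (size (enum_fset _)); apply/fsetP => p; rewrite !inE.
    case pS: (p \in S) => //=; have := memL _ pS.
    by case: (p.1 =P m0) => //= _ ->.
  rewrite card_U_sum /= ?m0L1 ?fset_uniq // big_cons; congr addn.
  rewrite -sum1_size big_seq [RHS]big_seq; apply: eq_bigr => i /c1 //.
have neL : enum_fset L != [::] by apply/eqP => e; move: L3; rewrite e.
have [M ML Mmax] := @seq_argmax nat (fun m : nat => m%:Z) (enum_fset L) neL.
have Mmax' : forall m, m \in L -> (m <= M)%N by move=> m /Mmax; rewrite lez_nat.
have ML1 : M \in L1.
  have : (0 < #|` L1|)%N by lia.
  rewrite cardfs_gt0 => /fset0Pn [m mL1].
  have := L1gt _ mL1; move: mL1; rewrite in_fsetD1 => /andP[_ mL] h.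
  rewrite in_fsetD1 ML andbT; apply/eqP => e; have := Mmax' _ mL; lia.
have [sM sMS sM1] := single M ML.
set R1 := map (addn m0) L1.
set R2 := map (addn M) L1.
have dis1 : forall l, l \in [:: m0 + m0]%N -> l \notin R1 ++ R2.
  move=> l; rewrite inE => /eqP ->; rewrite mem_cat; apply/negP => /orP[] /mapP [m mL1 e];
  have e' : (_ = _ :> nat) := e; have := L1gt _ mL1; have := L1gt _ ML1; lia.
have dis2 : forall l, l \in R1 -> l \notin R2.
  move=> l /mapP [m mL1 ->]; apply/negP => /mapP [m' m'L1 e].
  have := L1gt _ m'L1; have : (m <= M)%N.
    by apply: Mmax'; move: mL1; rewrite in_fsetD1 => /andP[].
  have e' : (_ = _ :> nat) := e; lia.
set T := sqset S.
have H := U_le T ([:: m0 + m0]%N ++ (R1 ++ R2)).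
rewrite U_union // U_union // in H.
have e0 : #|` U T [:: m0 + m0]%N| = #|` coset T (m0 + m0)|.
  by rewrite card_U_sum // big_seq1.
have e1 : ((#|` coset S m0| + 1) * #|` L1| <= #|` U T R1|)%N.
  rewrite card_U_sum; last by rewrite map_inj_uniq ?fset_uniq //; apply: addnI.
  rewrite big_map; apply: sum_ge => m mL1.
  have [s sS s1] := single m (fsubsetP (fsubsetDl L [fset m0]) _ mL1).
  exact: lvl1 k02 (L1gt _ mL1) sS s1.
have e2 : (1 * #|` L1| <= #|` U T R2|)%N.
  rewrite card_U_sum; last by rewrite map_inj_uniq ?fset_uniq //; apply: addnI.
  rewrite big_map; apply: sum_ge => m mL1.
  have [s sS s1] := single m (fsubsetP (fsubsetDl L [fset m0]) _ mL1).
  rewrite cardfs_gt0; apply/fset0Pn; exists (bsmul sM s).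
  by rewrite coset_mem sq_mem //= sM1 s1.
have e3 := lvl0 k02.
apply: (final_arith (k0 := #|` coset S m0|) (t := #|` L1|)) => //.
move: H e1 e2 e3; rewrite e0 /T; nia.
Qed.
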